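(* Let $\Omega_2=\{\omega_1,\omega_2\}$ with $\omega_1\neq\omega_2$, and $\mathcal{A}_2=2^{\Omega_2}$. A $q$-measure $\mu$ on $\mathcal{A}_2$ actualizes the coevent $\omega_1^*\oplus\omega_2^*$ if and only if $$\mu(\Omega_2)=\max(\mu(\{\omega_1\}),\mu(\{\omega_2\}))-\min(\mu(\{\omega_1\}),\mu(\{\omega_2\})).$$
   Context: Let $\Omega$ be a finite nonempty set and $\mathcal{A}=2^\Omega$. A coevent is a map $\phi:\mathcal{A}\to\{0,1\}$ with $\phi(\emptyset)=0$. For $\omega\in\Omega$ the evaluation map $\omega^*$ is the coevent with $\omega^*(A)=1$ if $\omega\in A$ and $0$ otherwise. Coevents are combined pointwise: $(\phi\oplus\psi)(A)=\phi(A)+\psi(A) \bmod 2$ and $(\phi\psi)(A)=\phi(A)\psi(A)$. For $f:\Omega\to[0,\infty)$ and a coevent $\phi$, the $q$-integral is $\int f\,d\phi=\int_0^\infty \phi(\{\omega\in\Omega: f(\omega)>\lambda\})\,d\lambda$ (Lebesgue measure in $\lambda$), and for $A\in\mathcal{A}$, $\int_A f\,d\phi=\int f\chi_A\,d\phi$. A $q$-measure is a map $\mu:\mathcal{A}\to[0,\infty)$ such that for all pairwise disjoint $A,B,C\in\mathcal{A}$: $\mu(A\cup B\cup C)=\mu(A\cup B)+\mu(A\cup C)+\mu(B\cup C)-\mu(A)-\mu(B)-\mu(C)$. The $q$-measure $\mu$ actualizes $\phi$ if there is a symmetric function $f:\Omega\times\Omega\to(0,\infty)$ such that for all $A\in\mathcal{A}$,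 $\mu(A)=\int g_A\,d\phi$, where $g_A(\omega')=\int_A f(\cdot,\omega')\,d\phi$ (the $q$-integral over $A$ of $\omega\mapsto f(\omega,\omega')$). *)

(* Defs.v *)
From Stdlib Require Import Reals.
Open Scope R_scope.

Definition set (T : Type) := T -> bool.
Definition set0 {T : Type} : set T := fun _ => false.
Definition setT {T : Type} : set T := fun _ => true.
Definition setU {T : Type} (A B : set T) : set T := fun w => orb (A w) (B w).
Definition disj {T : Type} (A B : set T) : Prop := forall w, andb (A w) (B w) = false.

Definition coev (T : Type) := set T -> bool.
Definition is_coevent {T : Type} (phi : coev T) : Prop := phi set0 = false.

Definition evalc {T : Type} (w : T) : coev T := fun A => A w.
Definition coxor {T : Type} (phi psi : coev T) : coev T := fun A => xorb (phi A) (psi A).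
Definition comul {T : Type} (phi psi : coev T) : coev T := fun A => andb (phi A) (psi A).

Definition b2R (b : bool) : R := if b then 1 else 0.

Definition level {T : Type} (f : T -> R) (l : R) : set T :=
  fun w => if Rlt_dec l (f w) then true else false.

(* q-integral: is_qint phi f r  <->  int_0^oo phi({f > l}) dl = r.
   The integrand vanishes for l >= max f (empty level set, phi(empty)=0), so the
   improper integral equals the Riemann integral over [0, M] for any upper bound
   M of f; we require existence of such an M with the Riemann integral equal r. *)
Definition is_qint {T : Type} (phi : coev T) (f : T -> R) (r : R) : Prop :=
  exists M : R, 0 <= M /\ (forall w, f w <= M) /\
    exists pr : Riemann_integrable (fun l => b2R (phi (level f l))) 0 M,
      RiemannInt pr = r.

Definition is_qint_on {T : Type} (phi : coev T) (A : set T) (f : T -> R) (r : R) : Prop :=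
  is_qint phi (fun w => if A w then f w else 0) r.

Definition qmeasure {T : Type} (mu : set T -> R) : Prop :=
  (forall A, 0 <= mu A) /\
  forall A B C : set T, disj A B -> disj A C -> disj B C ->
    mu (setU A (setU B C)) =
      mu (setU A B) + mu (setU A C) + mu (setU B C) - mu A - mu B - mu C.

Definition actualizes {T : Type} (mu : set T -> R) (phi : coev T) : Prop :=
  exists f : T -> T -> R,
    (forall x y, 0 < f x y) /\ (forall x y, f x y = f y x) /\
    forall A : set T, exists gA : T -> R,
      (forall w', is_qint_on phi A (fun w => f w w') (gA w')) /\
      is_qint phi gA (mu A).

(* Main.v *)
Require Import Defs.
From Stdlib Require Import Reals Lra Lia FunctionalExtensionality List.
Import ListNotations.
Open Scope R_scope.

Ltac crush := repeat match goal with
 | |- context[Rlt_dec ?a ?b] => destruct (Rlt_dec a b)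
 | H: context[Rlt_dec ?a ?b] |- _ => destruct (Rlt_dec a b)
 | |- context[Rle_dec ?a ?b] => destruct (Rle_dec a b)
 | H: context[Rle_dec ?a ?b] |- _ => destruct (Rle_dec a b)
 | |- context[Rcase_abs ?a] => destruct (Rcase_abs a)
 | H: context[Rcase_abs ?a] |- _ => destruct (Rcase_abs a)
 end; simpl in *; try lra.

Definition F (g : bool -> R) := fun l => b2R (coxor (evalc true) (evalc false) (level g l)).
Definition lo (g : bool -> R) := Rmin (Rmax (g true) 0) (Rmax (g false) 0).
Definition hi (g : bool -> R) := Rmax (Rmax (g true) 0) (Rmax (g false) 0).

Lemma F_lo g l : 0 < l < lo g -> F g l = 0.
Proof. unfold F, lo, coxor, evalc, level, Rmin, Rmax; intros; crush. Qed.
Lemma F_mid g l : lo g < l < hi g -> F g l = 1.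
Proof. unfold F, lo, hi, coxor, evalc, level, Rmin, Rmax; intros; crush. Qed.
Lemma F_hi g l : hi g < l -> F g l = 0.
Proof. unfold F, hi, coxor, evalc, level, Rmin, Rmax; intros; crush. Qed.
Lemma lo_ge0 g : 0 <= lo g.
Proof. unfold lo, Rmin, Rmax; crush. Qed.
Lemma lo_hi g : lo g <= hi g.
Proof. unfold lo, hi, Rmin, Rmax; crush. Qed.
Lemma hi_le g M : 0 <= M -> (forall w, g w <= M) -> hi g <= M.
Proof. intros HM Hb; generalize (Hb true) (Hb false); unfold hi, Rmax; intros; crush. Qed.

Lemma isstep g M (HM : 0 <= M) (Hb : forall w, g w <= M) : IsStepFun (F g) 0 M.
Proof.
  pose proof (lo_ge0 g); pose proof (lo_hi g); pose proof (hi_le g M HM Hb).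
  exists (0 :: lo g :: hi g :: M :: nil). exists (0 :: 1 :: 0 :: nil).
  unfold adapted_couple; repeat split.
  - intros i Hi; simpl in Hi; destruct i as [|[|[|i]]]; simpl; try lra; lia.
  - simpl; unfold Rmin; crush.
  - simpl; unfold Rmax; crush.
  - intros i Hi; simpl in Hi; destruct i as [|[|[|i]]]; simpl;
      intros x [Hx1 Hx2]; try lia.
    + apply F_lo; lra.
    + apply F_mid; lra.
    + apply F_hi; lra.
Qed.

Lemma intg g M (HM : 0 <= M) (Hb : forall w, g w <= M) : Riemann_integrable (F g) 0 M.
Proof.
  intro eps. exists (mkStepFun (isstep g M HM Hb)).
  exists (mkStepFun (StepFun_P4 0 M 0)). split.
  - intros t _. simpl. unfold fct_cte. rewrite Rminus_diag, Rabs_R0. lra.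
  - rewrite StepFun_P18, Rmult_0_l, Rabs_R0. apply cond_pos.
Qed.

Lemma intval g M (HM : 0 <= M) (Hb : forall w, g w <= M) (pr : Riemann_integrable (F g) 0 M) :
  RiemannInt pr = hi g - lo g.
Proof.
  pose proof (lo_ge0 g); pose proof (lo_hi g); pose proof (hi_le g M HM Hb).
  assert (p1 : Riemann_integrable (F g) 0 (lo g)) by (apply RiemannInt_P22 with M; auto; lra).
  assert (p2 : Riemann_integrable (F g) (lo g) M) by (apply RiemannInt_P23 with 0; auto; lra).
  assert (p3 : Riemann_integrable (F g) (lo g) (hi g)) by (apply RiemannInt_P22 with M; auto; lra).
  assert (p4 : Riemann_integrable (F g) (hi g) M) by (apply RiemannInt_P23 with (lo g); auto; lra).
  rewrite <- (RiemannInt_P26 p1 p2 pr), <- (RiemannInt_P26 p3 p4 p2).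
  rewrite (RiemannInt_P18 p1 (RiemannInt_P14 0 (lo g) 0)), RiemannInt_P15; auto.
  2: { intros x Hx; apply F_lo; lra. }
  rewrite (RiemannInt_P18 p3 (RiemannInt_P14 (lo g) (hi g) 1)), RiemannInt_P15; auto.
  2: { intros x Hx; apply F_mid; lra. }
  rewrite (RiemannInt_P18 p4 (RiemannInt_P14 (hi g) M 0)), RiemannInt_P15; auto.
  2: { intros x Hx; apply F_hi; lra. }
  lra.
Qed.

Definition V (g : bool -> R) := Rabs (Rmax (g true) 0 - Rmax (g false) 0).

Lemma hilo g : hi g - lo g = V g.
Proof. unfold hi, lo, V, Rmax, Rmin, Rabs; crush. Qed.

Lemma qint_val g r : is_qint (coxor (evalc true) (evalc false)) g r -> r = V g.
Proof.
  intros [M [HM [Hb [pr Hpr]]]]. rewrite <- Hpr, <- hilo.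
  exact (intval g M HM Hb pr).
Qed.

Lemma qint_ex g r : r = V g -> is_qint (coxor (evalc true) (evalc false)) g r.
Proof.
  intros ->. exists (hi g). pose proof (lo_ge0 g); pose proof (lo_hi g).
  assert (Hb : forall w, g w <= hi g) by (intros []; unfold hi, Rmax; crush).
  split; [lra|]. split; [exact Hb|].
  exists (intg g (hi g) ltac:(lra) Hb). rewrite (intval g (hi g) ltac:(lra) Hb). apply hilo.
Qed.

Lemma canon (A : set bool) :
  (A = set0) \/ (A = setT) \/ (A = fun w => w) \/ (A = negb).
Proof.
  destruct (A true) eqn:Ht, (A false) eqn:Hf.
  - right; left; extensionality w; destruct w; auto.
  - right; right; left; extensionality w; destruct w; auto.
  - right; right; right; extensionality w; destruct w; auto.
  - left; extensionality w; destruct w; auto.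
Qed.

Lemma mu0 (mu : set bool -> R) : qmeasure mu -> mu set0 = 0.
Proof.
  intros [_ H]. assert (E : setU (@set0 bool) set0 = set0) by (extensionality w; reflexivity).
  assert (E2 : setU (@set0 bool) (setU set0 set0) = set0) by (extensionality w; reflexivity).
  assert (D : disj (@set0 bool) set0) by (intro; reflexivity).
  specialize (H set0 set0 set0 D D D). rewrite E2, E in H. lra.
Qed.

Theorem theorem4p1 (mu : set bool -> R) (Hmu : qmeasure mu) :
  actualizes mu (coxor (evalc true) (evalc false)) <->
  mu setT = Rmax (mu (fun w => w)) (mu negb) - Rmin (mu (fun w => w)) (mu negb).
Proof.
  split.
  - intros [f [Hpos [Hsym H]]].
    pose proof (Hpos true true); pose proof (Hpos true false); pose proof (Hpos false false).
    pose proof (Hsym true false).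
    destruct (H (fun w => w)) as [g1 [H1a H1b]].
    destruct (H negb) as [g2 [H2a H2b]].
    destruct (H setT) as [g3 [H3a H3b]].
    apply qint_val in H1b, H2b, H3b.
    rewrite H1b, H2b, H3b. unfold V.
    pose proof (qint_val _ _ (H1a true)); pose proof (qint_val _ _ (H1a false)).
    pose proof (qint_val _ _ (H2a true)); pose proof (qint_val _ _ (H2a false)).
    pose proof (qint_val _ _ (H3a true)); pose proof (qint_val _ _ (H3a false)).
    unfold V in *; simpl in *.
    rewrite <- H3 in H6.
    assert (G1 : g1 true = f true true) by (rewrite H4; unfold Rmax, Rabs; crush).
    assert (G2 : g1 false = f true false) by (rewrite H5; unfold Rmax, Rabs; crush).
    assert (G3 : g2 true = f true false) by (rewrite H6; unfold Rmax, Rabs; crush).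
    assert (G4 : g2 false = f false false) by (rewrite H7; unfold Rmax, Rabs; crush).
    assert (G5 : g3 true = Rabs (f true true - f true false)) by (rewrite H8, <- H3; unfold Rmax; crush).
    assert (G6 : g3 false = Rabs (f true false - f false false)) by (rewrite H9; unfold Rmax; crush).
    rewrite G1, G2, G3, G4, G5, G6.
    assert (RM : forall x, 0 <= x -> Rmax x 0 = x) by (intros; unfold Rmax; crush).
    rewrite !RM by (try apply Rabs_pos; lra).
    generalize (f true true) (f true false) (f false false); intros a b c.
    unfold Rmax, Rmin, Rabs; crush.
  - intro E. destruct Hmu as [Hnn Hq].
    pose proof (Hnn (fun w : bool => w)) as P1; pose proof (Hnn negb) as P2.
    set (m1 := mu (fun w : bool => w)) in *. set (m2 := mu negb) in *.
    exists (fun x y : bool => if x then (if y then 1 + m1 else 1) else (if y then 1 else 1 + m2)).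
    split; [intros [] []; lra|]. split; [intros [] []; reflexivity|].
    intro A.
    exists (fun w' : bool => V (fun w : bool => if A w then
       (if w then (if w' then 1 + m1 else 1) else (if w' then 1 else 1 + m2)) else 0)).
    split; [intro w'; apply qint_ex; reflexivity|].
    apply qint_ex.
    destruct (canon A) as [-> | [-> | [-> | ->]]].
    + rewrite (mu0 mu (conj Hnn Hq)). unfold V; simpl. unfold Rmax, Rabs; crush.
    + rewrite E. unfold V, set0, setT; simpl. unfold Rmax, Rmin, Rabs; crush.
    + fold m1. unfold V; simpl. unfold Rmax, Rabs; crush.
    + fold m2. unfold V; simpl. unfold Rmax, Rabs; crush.
Qed.
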